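(* Consider a linear binary non-uniform $C^0$-convergent subdivision scheme with fixed mask size, $n_0$ initial control points forming $\bar p^0\in\mathbb{R}^{n_0\times m}$, and location-dependent $n_0\times n_0$ matrices $S^{[k]}_{\eta_k}$, $\eta_k\in\{1,2\}^k$, as described in the context. Define the binary tree of maps $f_r(A)=AS^{[1]}_r\bar p^0$ ($r=1,2$, $A\in\mathbb{R}^{n_0}$ a row vector, values in $\mathbb{R}^m$) and, for $k>1$, $f_{\eta_k}(A)=AS^{[k]}_{\eta_k}$ on $\mathbb{R}^{n_0}$. Then for every $\eta\in\{1,2\}^{\mathbb{N}}$ and every $A\in K^{n_0-1}$ the limit $$\gamma(\eta)=\lim_{k\to\infty}f_{\tau_1\eta}\circ f_{\tau_2\eta}\circ\cdots\circ f_{\tau_k\eta}(A)=\lim_{k\to\infty}AS^{[k]}_{\tau_k\eta}\cdots S^{[2]}_{\tau_2\eta}S^{[1]}_{\tau_1\eta}\bar p^0$$ exists and is independent of $A$, and the attractor $U_{TM}=\bigcup_{\eta}\gamma(\eta)$ equals the limit curve in $\mathbb{R}^m$ of the non-uniform scheme started from $\bar p^0$.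
   Context: $\tau_\ell\eta$ is the truncation of $\eta$ to its first $\ell$ symbols. $K^{n_0-1}=\{(x_1,\ldots,x_{n_0})\in\mathbb{R}^{n_0}:\sum_ix_i=1\}$. The matrices are defined recursively: $S^{[1]}_1$ (resp. $S^{[1]}_2$) generates from $\bar p^0$ the first (resp. last) $n_0$ points at level 1; with $\bar p_{\eta_k}=S^{[k]}_{i_1\ldots i_k}\cdots S^{[2]}_{i_1i_2}S^{[1]}_{i_1}\bar p^0$ the $n_0$ points at level $k$ attached to location $\eta_k=(i_1\ldots i_k)$, the matrices $S^{[k+1]}_{\eta_k1}$ and $S^{[k+1]}_{\eta_k2}$ generate the first and last $n_0$ points obtained by applying the (location-dependent) refinement rules to $\bar p_{\eta_k}$. $C^0$-convergence means that for each $\eta$ the matrices $\bar p_{\tau_k\eta}$ converge to an $n_0\times m$ matrix with all rows equal to a point $q_\eta$, and the limit curve is $\bigcup_\eta q_\eta$. *)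

(* Defs.v *)
From Stdlib Require Import Reals List.
Import ListNotations.
Open Scope R_scope.

(* Matrices are functions of (row, column) indices; only indices below the
   stated dimensions are meaningful.  Points of R^m are functions nat -> R,
   meaningful on coordinates j < m. *)
Definition mat := nat -> nat -> R.

Definition sumR (n : nat) (f : nat -> R) : R :=
  fold_right Rplus 0 (map f (seq 0 n)).

Definition mmul (n : nat) (A B : mat) : mat :=
  fun i j => sumR n (fun l => A i l * B l j).

Definition rvmul (n : nat) (A : nat -> R) (B : mat) : nat -> R :=
  fun j => sumR n (fun l => A l * B l j).

(* An infinite binary word eta : {1,2}^N is encoded as nat -> bool
   (false = symbol 1, true = symbol 2), eta 0 being the first symbol.
   tau k eta = truncation of eta to its first k symbols. *)
Definition tau (k : nat) (eta : nat -> bool) : list bool := map eta (seq 0 k).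

(* Refinement matrices: S k loc is the n0 x n0 matrix S^[k]_{loc} for a
   location loc of length k (k >= 1).
   pbar S p0 n0 k eta = S^[k]_{tau_k eta} ... S^[1]_{tau_1 eta} p0
   (the n0 points at level k attached to tau_k eta); level 0 is p0. *)
Fixpoint pbar (n0 : nat) (S : nat -> list bool -> mat) (p0 : mat)
  (k : nat) (eta : nat -> bool) : mat :=
  match k with
  | O => p0
  | Datatypes.S k' => mmul n0 (S (Datatypes.S k') (tau (Datatypes.S k') eta))
                        (pbar n0 S p0 k' eta)
  end.

Definition C0_convergent (n0 m : nat) (S : nat -> list bool -> mat) (p0 : mat)
  : Prop :=
  forall eta : nat -> bool, exists q : nat -> R,
    forall i j, (i < n0)%nat -> (j < m)%nat ->
      Un_cv (fun k => pbar n0 S p0 k eta i j) (q j).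

Definition is_limit_point (n0 m : nat) (S : nat -> list bool -> mat) (p0 : mat)
  (eta : nat -> bool) (x : nat -> R) : Prop :=
  forall i j, (i < n0)%nat -> (j < m)%nat ->
    Un_cv (fun k => pbar n0 S p0 k eta i j) (x j).

Definition limit_curve (n0 m : nat) (S : nat -> list bool -> mat) (p0 : mat)
  (x : nat -> R) : Prop :=
  exists eta, is_limit_point n0 m S p0 eta x.

Definition inK (n0 : nat) (A : nat -> R) : Prop := sumR n0 A = 1.

(* f_{tau_1 eta} o ... o f_{tau_k eta} (A) = A S^[k]_{tau_k eta} ... S^[1] p0 *)
Definition tm_iter (n0 : nat) (S : nat -> list bool -> mat) (p0 : mat)
  (k : nat) (eta : nat -> bool) (A : nat -> R) : nat -> R :=
  rvmul n0 A (pbar n0 S p0 k eta).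

Definition is_gamma (n0 m : nat) (S : nat -> list bool -> mat) (p0 : mat)
  (eta : nat -> bool) (A : nat -> R) (x : nat -> R) : Prop :=
  forall j, (j < m)%nat -> Un_cv (fun k => tm_iter n0 S p0 k eta A j) (x j).

(* Main.v *)
Require Import Defs.
From Stdlib Require Import Reals List Lra Lia.
Open Scope R_scope.

Lemma cv_const (c : R) : Un_cv (fun _ => c) c.
Proof. intros e He; exists 0%nat; intros; unfold R_dist; rewrite Rminus_diag, Rabs_R0; lra. Qed.

Lemma cv_sum_list (A : nat -> R) (u : nat -> nat -> R) (q : R) (s : list nat) :
  (forall l, In l s -> Un_cv (u l) q) ->
  Un_cv (fun k => fold_right Rplus 0 (map (fun l => A l * u l k) s))
        (fold_right Rplus 0 (map A s) * q).
Proof.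
  induction s as [|a s IH]; intros H; simpl.
  - replace (0 * q) with 0 by ring. apply cv_const.
  - replace ((A a + fold_right Rplus 0 (map A s)) * q) with
      (A a * q + fold_right Rplus 0 (map A s) * q) by ring.
    apply CV_plus.
    + apply CV_mult. apply cv_const. apply H; simpl; auto.
    + apply IH; intros; apply H; simpl; auto.
Qed.

Lemma e0_sum (s : list nat) : (forall l, In l s -> (0 < l)%nat) ->
  fold_right Rplus 0 (map (fun l => if Nat.eqb l 0 then 1 else 0) s) = 0.
Proof.
  induction s as [|a s IH]; intros H; simpl; auto.
  destruct (Nat.eqb_spec a 0).
  - specialize (H a (or_introl eq_refl)); lia.
  - rewrite IH; [lra|]. intros; apply H; simpl; auto.
Qed.

Lemma e0_inK n0 : (1 <= n0)%nat -> inK n0 (fun l => if Nat.eqb l 0 then 1 else 0).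
Proof.
  intros H. unfold inK, sumR. destruct n0 as [|n]; [lia|].
  simpl. rewrite e0_sum. lra. intros l Hl. apply in_seq in Hl. lia.
Qed.

Lemma gamma_of_limit n0 m S p0 eta q A :
  is_limit_point n0 m S p0 eta q -> inK n0 A -> is_gamma n0 m S p0 eta A q.
Proof.
  intros Hq HA j Hj. unfold tm_iter, rvmul.
  pose proof (cv_sum_list A (fun l k => pbar n0 S p0 k eta l j) (q j) (seq 0 n0)) as C.
  unfold inK, sumR in HA. rewrite HA, Rmult_1_l in C. apply C.
  intros l Hl. apply in_seq in Hl. apply Hq; lia.
Qed.

Theorem mainTheorem12 (n0 m : nat) (S : nat -> list bool -> mat) (p0 : mat)
  (Hn0 : (1 <= n0)%nat)
  (Hconv : C0_convergent n0 m S p0) :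
  (* the limit gamma(eta) exists and is independent of A in K^{n0-1} *)
  (forall eta : nat -> bool, exists g : nat -> R,
     forall A : nat -> R, inK n0 A -> is_gamma n0 m S p0 eta A g)
  /\
  (* the attractor U_TM = \bigcup_eta gamma(eta) equals the limit curve *)
  (forall x : nat -> R,
     (exists eta : nat -> bool,
        forall A : nat -> R, inK n0 A -> is_gamma n0 m S p0 eta A x)
     <-> limit_curve n0 m S p0 x).
Proof.
  split.
  - intros eta. destruct (Hconv eta) as [q Hq]. exists q. intros A HA.
    apply gamma_of_limit; auto.
  - intros x; split.
    + intros [eta Heta]. exists eta. destruct (Hconv eta) as [q Hq].
      pose proof (Heta _ (e0_inK n0 Hn0)) as G1.
      pose proof (gamma_of_limit n0 m S p0 eta q _ Hq (e0_inK n0 Hn0)) as G2.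
      intros i j Hi Hj.
      replace (x j) with (q j). apply Hq; auto.
      eapply UL_sequence; [apply G2|apply G1]; auto.
    + intros [eta Heta]. exists eta. intros A HA. apply gamma_of_limit; auto.
Qed.
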